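(* Let $\kappa\ge 2$, let $\psi^+$ be a rooted binary topological tree on a taxon set $X$, and let $a,b,c,d\in X$ be distinct taxa such that the unrooted topology of $\psi^+|_{\{a,b,c,d\}}$ is the quartet $ab|cd$. For $P\in\mathrm{UE}_\kappa(\psi^+)$ let $\tilde P=P_{\{a,b,c,d\}}$. Then for all $P\in\mathrm{UE}_\kappa(\psi^+)$, $\operatorname{Flat}_{ab|cd}(\tilde P)$ has rank at most $\binom{\kappa+1}{2}$, while for generic $P\in\mathrm{UE}_\kappa(\psi^+)$ both $\operatorname{Flat}_{ac|bd}(\tilde P)$ and $\operatorname{Flat}_{ad|bc}(\tilde P)$ have rank $\kappa^2$.
   Context: A $\kappa$-state site pattern probability tensor on a finite taxon set $X$ is an $|X|$-way $\kappa\times\cdots\times\kappa$ real array with one index per taxon, non-negative entries summing to 1. $P_Y$ denotes marginalization to taxa $Y\subseteq X$; $\psi^+|_Y$ is the induced rooted subtree. A 2-clade of a rooted tree is a pair of leaves that are exactly the leaf descendants of some vertex. $\mathrm{UE}_\kappa(\psi^+)$ is the set of all such tensors $P$ such that for every $Y\subseteq X$ and every 2-clade $\{a,b\}$ of $\psi^+|_Y$, $P_Y$ is invariant under exchanging the $a$ and $b$ indices. For a 4-way $\kappa\times\kappa\times\kappa\times\kappa$ array $\tilde P$ with indices corresponding to taxa $a,b,c,d$, the flattening $\operatorname{Flat}_{ab|cd}(\tilde P)$ is the $\kappa^2\times\kappa^2$ matrix with rows indexed by pairs $(i,j)$ of states of $a,b$, columns indexed by pairs $(k,l)$ of states of $c,d$,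 and $((i,j),(k,l))$-entry $\tilde P(i,j,k,l)$; $\operatorname{Flat}_{ac|bd}$ and $\operatorname{Flat}_{ad|bc}$ are defined analogously, with rows indexed by the states of the first pair of taxa and columns by the states of the second pair. ''Generic'' means: outside a subset of measure zero (a proper algebraic subset) of $\mathrm{UE}_\kappa(\psi^+)$. *)

(* Defs.v *)
From HB Require Import structures.
From mathcomp Require Import all_boot all_order all_algebra.
From mathcomp Require Import reals.
From mathcomp Require Import mpoly.
Unset Printing Implicit Defensive.
Import Order.TTheory GRing.Theory Num.Theory.
Local Open Scope ring_scope.

Inductive rtree (X : Type) : Type :=
| Leaf of X
| Node of rtree X & rtree X.
Arguments Leaf {X} _.
Arguments Node {X} _ _.

Fixpoint leaves {X : Type} (t : rtree X) : seq X :=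
  match t with Leaf x => [:: x] | Node l r => leaves l ++ leaves r end.

Definition is_tree_on {X : finType} (t : rtree X) : Prop :=
  uniq (leaves t) /\ forall x : X, x \in leaves t.

Fixpoint is_subtree {X : Type} (s t : rtree X) : Prop :=
  s = t \/ match t with
           | Leaf _ => False
           | Node l r => is_subtree s l \/ is_subtree s r
           end.

(* Induced rooted subtree t|_Y (None if Y contains no leaf): keep the
   leaves in Y and suppress the resulting degree-2 vertices. *)
Fixpoint restrict {X : finType} (Y : {set X}) (t : rtree X) : option (rtree X) :=
  match t with
  | Leaf x => if x \in Y then Some (Leaf x) else None
  | Node l r =>
      match restrict Y l, restrict Y r with
      | Some l', Some r' => Some (Node l' r')
      | Some l', None => Some l'
      | None, Some r' => Some r'
      | None, None => None
      end
  end.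

Definition two_clade {X : finType} (ot : option (rtree X)) (a b : X) : Prop :=
  match ot with
  | None => False
  | Some t => exists s, is_subtree s t /\ perm_eq (leaves s) [:: a; b]
  end.

(* The unrooted topology of t|_{a,b,c,d} is the quartet ab|cd:
   some edge (= non-root vertex cluster) separates {a,b} from {c,d}. *)
Definition displays_quartet {X : finType} (t : rtree X) (a b c d : X) : Prop :=
  match restrict [set a; b; c; d] t with
  | None => False
  | Some u => exists s, is_subtree s u /\
      (perm_eq (leaves s) [:: a; b] \/ perm_eq (leaves s) [:: c; d])
  end.

Definition tensor (R : Type) (X : finType) (k : nat) := {ffun X -> 'I_k} -> R.

(* Marginalization to Y, viewed as a function of a full assignment s that
   depends only on the states of taxa in Y. *)
Definition marg {R : realType} {X : finType} {k : nat} (Y : {set X})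
  (P : tensor R X k) (s : {ffun X -> 'I_k}) : R :=
  \sum_(t : {ffun X -> 'I_k} | [forall y in Y, t y == s y]) P t.

Definition swap_idx {X : finType} {k : nat} (s : {ffun X -> 'I_k}) (a b : X)
  : {ffun X -> 'I_k} :=
  [ffun x => if x == a then s b else if x == b then s a else s x].

Definition is_prob_tensor {R : realType} {X : finType} {k : nat} (P : tensor R X k) : Prop :=
  (forall s, 0 <= P s) /\ \sum_s P s = 1.

Definition UE {R : realType} {X : finType} (k : nat) (psi : rtree X) (P : tensor R X k) : Prop :=
  is_prob_tensor P /\
  forall (Y : {set X}) (a b : X), two_clade (restrict Y psi) a b ->
    forall s, marg Y P s = marg Y P (swap_idx s a b).

Definition marg4 {R : realType} {X : finType} {k : nat} (P : tensor R X k) (a b c d : X)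
  (i j l m : 'I_k) : R :=
  \sum_(s : {ffun X -> 'I_k} | [&& s a == i, s b == j, s c == l & s d == m]) P s.

Definition pairs (k : nat) := ('I_k * 'I_k)%type.

Definition flat {R : realType} {k : nat} (Pt : 'I_k -> 'I_k -> 'I_k -> 'I_k -> R)
  : 'M[R]_(#|{: pairs k}|) :=
  \matrix_(r, c) let: (i, j) := enum_val r in let: (l, m) := enum_val c in Pt i j l m.

Definition Flat_ab_cd {R : realType} {X : finType} {k : nat} (P : tensor R X k) (a b c d : X) :=
  flat (fun i j l m => marg4 P a b c d i j l m).
Definition Flat_ac_bd {R : realType} {X : finType} {k : nat} (P : tensor R X k) (a b c d : X) :=
  flat (fun i l j m => marg4 P a b c d i j l m).
Definition Flat_ad_bc {R : realType} {X : finType} {k : nat} (P : tensor R X k) (a b c d : X) :=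
  flat (fun i m j l => marg4 P a b c d i j l m).

Definition coords {R : realType} {X : finType} {k : nat} (P : tensor R X k)
  : 'I_#|{: {ffun X -> 'I_k}}| -> R :=
  fun i => P (enum_val i).

(* A property holds for generic P in UE_kappa(psi+): it holds outside a
   proper algebraic subset of UE, i.e. outside the zero set of some
   polynomial in the tensor entries that does not vanish on all of UE. *)
Definition generic_UE {R : realType} {X : finType} (k : nat) (psi : rtree X)
  (Q : tensor R X k -> Prop) : Prop :=
  exists f : {mpoly R[#|{: {ffun X -> 'I_k}}|]},
    (exists P, UE k psi P /\ f.@[coords P] != 0) /\
    (forall P, UE k psi P -> f.@[coords P] != 0 -> Q P).

(* Main.v *)
Require Import Defs.
From HB Require Import structures.
From mathcomp Require Import all_boot all_order all_algebra.
From mathcomp Require Import reals.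
From mathcomp Require Import mpoly fingroup perm ring zify.
Import Order.TTheory GRing.Theory Num.Theory.
Local Open Scope ring_scope.

Section Trees.
Variable X : finType.
Implicit Types (s t u : rtree X).

Lemma subtree_leaves s t : is_subtree s t -> {subset leaves s <= leaves t}.
Proof.
elim: t => [x|l IHl r IHr] /=; first by case=> // ->.
case=> [->//|[/IHl H|/IHr H]] z /H; rewrite mem_cat => ->; rewrite ?orbT //.
Qed.
Arguments subtree_leaves {s t}.

Lemma laminar t s1 s2 z : uniq (leaves t) -> is_subtree s1 t -> is_subtree s2 t ->
  z \in leaves s1 -> z \in leaves s2 ->
  {subset leaves s1 <= leaves s2} \/ {subset leaves s2 <= leaves s1}.
Proof.
elim: t s1 s2 => [x|l IHl r IHr] s1 s2 Hu H1 H2.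
  by case: H1 => // ->; case: H2 => // ->; left.
case: H1 => [E1|H1]; first by right; rewrite E1; exact: subtree_leaves.
case: H2 => [E2|H2]; first by left; rewrite E2; apply: subtree_leaves; right.
move: Hu; rewrite /= cat_uniq => /and3P [Hl Hlr Hr].
case: H1 => H1; case: H2 => H2 z1 z2.
- exact: IHl H1 H2 z1 z2.
- have := subtree_leaves H1 _ z1; have := subtree_leaves H2 _ z2.
  by move=> zr zl; move/hasPn: Hlr => /(_ z zr); rewrite zl.
- have := subtree_leaves H1 _ z1; have := subtree_leaves H2 _ z2.
  by move=> zl zr; move/hasPn: Hlr => /(_ z zr); rewrite zl.
- exact: IHr H1 H2 z1 z2.
Qed.

Definition oleaves (o : option (rtree X)) := if o is Some u then leaves u else [::].

Lemma restrict_leaves Y t : oleaves (restrict Y t) = [seq z <- leaves t | z \in Y].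
Proof.
elim: t => [x|l IHl r IHr] /=; first by case: (x \in Y).
rewrite filter_cat -IHl -IHr.
case: (restrict Y l) => [?|]; case: (restrict Y r) => [?|] //=; by rewrite cats0.
Qed.

Lemma restrict_subtree Y t u s : restrict Y t = Some u -> is_subtree s u ->
  exists s0, is_subtree s0 t /\ leaves s = [seq z <- leaves s0 | z \in Y].
Proof.
elim: t u s => [x|l IHl r IHr] u s /=.
  case: ifP => // xY [<-] [->|//]; exists (Leaf x); split; first by left.
  by rewrite /= xY.
have HL := restrict_leaves Y l; have HR := restrict_leaves Y r.
case El: (restrict Y l) => [l'|]; case Er: (restrict Y r) => [r'|] //.
- case=> <- [->|[Hs|Hs]].
  + exists (Node l r); split; first by left.
    by rewrite /= filter_cat -HL -HR El Er.
  + have [s0 [H1 H2]] := IHl _ _ El Hs; by exists s0; split=> //; right; left.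
  + have [s0 [H1 H2]] := IHr _ _ Er Hs; by exists s0; split=> //; right; right.
- case=> <- Hs; have [s0 [H1 H2]] := IHl _ _ El Hs; by exists s0; split=> //; right; left.
- case=> <- Hs; have [s0 [H1 H2]] := IHr _ _ Er Hs; by exists s0; split=> //; right; right.
Qed.
Arguments restrict_subtree {Y t u s}.

Lemma two_clade_cluster Y t x y : two_clade (restrict Y t) x y ->
  exists s0, is_subtree s0 t /\ x \in leaves s0 /\ y \in leaves s0 /\ x \in Y /\ y \in Y /\
    forall z, z \in leaves s0 -> z \in Y -> z = x \/ z = y.
Proof.
rewrite /two_clade; case E: (restrict Y t) => [u|] // [s [Hs Hp]].
have [s0 [H1 H2]] := restrict_subtree E Hs.
rewrite H2 in Hp.
have Hm z : (z \in Y) && (z \in leaves s0) = (z \in [:: x; y]).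
  by rewrite -(perm_mem Hp) mem_filter.
have := Hm x; have := Hm y; rewrite !inE !eqxx orbT => /andP[yY yl] /andP [xY xl].
exists s0; do 5!(split=> //).
move=> z zl zY; have := Hm z; rewrite zY zl !inE => /esym /orP [] /eqP ->; tauto.
Qed.

Lemma quartet_cluster t a b c d : uniq [:: a;b;c;d] -> displays_quartet t a b c d ->
  exists s0, is_subtree s0 t /\
   ((a \in leaves s0 /\ b \in leaves s0 /\ c \notin leaves s0 /\ d \notin leaves s0) \/
    (c \in leaves s0 /\ d \in leaves s0 /\ a \notin leaves s0 /\ b \notin leaves s0)).
Proof.
move=> Hu; rewrite /displays_quartet; case E: (restrict _ t) => [u|] // [s [Hs Hp]].
have [s0 [H1 H2]] := restrict_subtree E Hs.
exists s0; split => //.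
move: Hu; rewrite /= !inE !negb_or => /andP [/and3P [ab ac ad]] /andP [/andP [bc bd]] /andP [cd _].
have Hm p q (Hpq : perm_eq (leaves s) [:: p; q]) z :
    (z \in [set a; b; c; d]) && (z \in leaves s0) = (z \in [:: p; q]).
  by rewrite -(perm_mem Hpq) H2 mem_filter.
have E1 := negbTE ab; have E2 := negbTE ac; have E3 := negbTE ad.
have E4 := negbTE bc; have E5 := negbTE bd; have E6 := negbTE cd.
have F1 := E1; have F2 := E2; have F3 := E3; have F4 := E4; have F5 := E5; have F6 := E6.
rewrite eq_sym in F1; rewrite eq_sym in F2; rewrite eq_sym in F3.
rewrite eq_sym in F4; rewrite eq_sym in F5; rewrite eq_sym in F6.
case: Hp => Hp; [left|right]; have Hz := Hm _ _ Hp;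
  have := Hz a; have := Hz b; have := Hz c; have := Hz d;
  rewrite !inE !eqxx /= ?orbT /= ?E1 ?E2 ?E3 ?E4 ?E5 ?E6 ?F1 ?F2 ?F3 ?F4 ?F5 ?F6 /=;
  by move=> -> -> -> ->.
Qed.

Arguments laminar {t s1 s2 z}.

Lemma VY_single (psi v w0 : rtree X) (Y : {set X}) x y :
  uniq (leaves psi) -> is_subtree v psi -> is_subtree w0 psi ->
  x \in leaves v -> y \notin leaves v -> x \in leaves w0 -> y \in leaves w0 ->
  (forall z, z \in leaves w0 -> z \in Y -> z = x \/ z = y) ->
  forall z, z \in leaves v -> z \in Y -> z = x.
Proof.
move=> Hu Hv Hw xv yv xw yw Hwy z zv zY.
case: (laminar Hu Hv Hw xv xw) => Hs.
  by case: (Hwy z (Hs _ zv) zY) => // E; move: zv yv; rewrite E => ->.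
by move: yv; rewrite (Hs _ yw).
Qed.
Arguments VY_single {psi v w0 Y x y}.

End Trees.
Section Witness.
Variables (R : realType) (X : finType) (k : nat) (V : {set X}).
Implicit Types (t s : {ffun X -> 'I_k}).

Definition w (sg i : 'I_k) : R := 1 + (i == sg)%:R.
Definition hV (sg tau : 'I_k) (z : X) (i : 'I_k) : R :=
  if z \in V then (i == tau)%:R else w sg i.
Definition P0 t : R := \sum_sg \sum_tau w sg tau * \prod_z hV sg tau z (t z).
Definition Z0 : R := \sum_t P0 t.
Definition Pw : tensor R X k := fun t => P0 t / Z0.

Lemma w_gt0 sg i : 0 < w sg i.
Proof. by rewrite /w ltr_wpDr ?ler0n ?ltr01. Qed.

Lemma hV_ge0 sg tau z i : 0 <= hV sg tau z i.
Proof. by rewrite /hV; case: (z \in V); rewrite ?ler0n // ltW ?w_gt0. Qed.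

Lemma P0_ge0 t : 0 <= P0 t.
Proof.
apply: sumr_ge0 => sg _; apply: sumr_ge0 => tau _.
apply: mulr_ge0; first by rewrite ltW ?w_gt0.
by apply: prodr_ge0 => z _; apply: hV_ge0.
Qed.

Lemma sum_delta (F : 'I_k -> R) j : \sum_i (i == j)%:R * F i = F j.
Proof.
rewrite (bigD1 j) //= eqxx mul1r big1 ?addr0 // => i /negbTE ->; by rewrite mul0r.
Qed.

Lemma sum_hV sg tau z :
  \sum_i hV sg tau z i = if z \in V then 1 else k%:R + 1.
Proof.
rewrite /hV; case: (z \in V).
  by rewrite -[RHS](sum_delta (fun _ => 1) tau); apply: eq_bigr => i _; rewrite mulr1.
rewrite /w big_split /= sumr_const card_ord; congr (_ + _).
by rewrite -[RHS](sum_delta (fun _ => 1) sg); apply: eq_bigr => i _; rewrite mulr1.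
Qed.

Definition Hs z : R := if z \in V then 1 else k%:R + 1.

Lemma Hs_gt0 z : 0 < Hs z.
Proof. by rewrite /Hs; case: (z \in V); rewrite ?ltr01 // ltr_wpDl ?ler0n ?ltr01. Qed.

Lemma Z0_E : Z0 = \sum_sg \sum_tau w sg tau * \prod_z Hs z.
Proof.
rewrite /Z0 /P0 exchange_big; apply: eq_bigr => sg _.
rewrite exchange_big; apply: eq_bigr => tau _.
rewrite -mulr_sumr; congr (_ * _).
rewrite -(bigA_distr_bigA (fun z i => hV sg tau z i)) /=.
by apply: eq_bigr => z _; rewrite sum_hV.
Qed.

Lemma Z0_gt0 : (0 < k)%N -> 0 < Z0.
Proof.
move=> k0; pose i0 := Ordinal k0.
rewrite Z0_E (bigD1 i0) //= ltr_wpDr //.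
  by apply: sumr_ge0 => sg _; apply: sumr_ge0 => tau _; rewrite mulr_ge0 ?ltW ?w_gt0 ?prodr_gt0 // => z _; apply: Hs_gt0.
rewrite (bigD1 i0) //= ltr_wpDr //.
  by apply: sumr_ge0 => tau _; rewrite mulr_ge0 ?ltW ?w_gt0 ?prodr_gt0 // => z _; apply: Hs_gt0.
by rewrite mulr_gt0 ?w_gt0 ?prodr_gt0 // => z _; apply: Hs_gt0.
Qed.

Lemma P0_const x0 t : x0 \in V ->
  P0 t = if [forall z in V, t z == t x0] then
           \sum_sg w sg (t x0) * \prod_(z | z \notin V) w sg (t z) else 0.
Proof.
move=> x0V.
have Hprod sg tau : \prod_z hV sg tau z (t z) =
    ([forall z in V, t z == tau])%:R * \prod_(z | z \notin V) w sg (t z).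
  rewrite (bigID (fun z => z \in V)) /=; congr (_ * _); last first.
    by apply: eq_bigr => z /negbTE zV; rewrite /hV zV.
  case: (boolP [exists z in V, t z != tau]) => [/exists_inP [z zV ne]|/exists_inPn H].
    rewrite (bigD1 z) //= /hV zV (negbTE ne) mul0r.
    suff -> : [forall z in V, t z == tau] = false by [].
    by apply/negbTE/negP => /forall_inP /(_ z zV); rewrite (negbTE ne).
  have H' : [forall z in V, t z == tau] by apply/forall_inP => z /H; rewrite negbK.
  by rewrite H' big1 // => z zV; rewrite /hV zV; move/forall_inP: H' => /(_ z zV) ->.
rewrite /P0; case: ifP => HC.
  apply: eq_bigr => sg _.
  rewrite (eq_bigr (fun tau => (tau == t x0)%:R * (w sg tau * \prod_(z | z \notin V) w sg (t z)))).
    by rewrite sum_delta.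
  move=> tau _; rewrite Hprod.
  have -> : [forall z in V, t z == tau] = (tau == t x0).
    apply/idP/idP => [/forall_inP /(_ x0 x0V) /eqP -> //| /eqP ->] //.
  by rewrite mulrCA.
rewrite big1 // => sg _; rewrite big1 // => tau _.
rewrite Hprod.
case: (boolP [forall z in V, t z == tau]) => H; last by rewrite !mul0r mulr0.
move/negbT: HC => /negP []; apply/forall_inP => z zV.
by move/forall_inP: H => H; rewrite (eqP (H z zV)) (eqP (H x0 x0V)).
Qed.


Lemma swap_tperm s x y : swap_idx s x y = [ffun z => s (tperm x y z)].
Proof.
apply/ffunP => z; rewrite !ffunE.
case: tpermP => [->|->|/eqP zx /eqP zy]; rewrite ?eqxx //.
  by case: eqP => // ->.
by rewrite (negbTE zx) (negbTE zy).
Qed.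

Lemma swap_idxC s x y : swap_idx s x y = swap_idx s y x.
Proof. by rewrite !swap_tperm tpermC. Qed.

Lemma P0_perm (g : {perm X}) t : (forall z, (g z \in V) = (z \in V)) ->
  P0 [ffun z => t (g z)] = P0 t.
Proof.
move=> Hg; apply: eq_bigr => sg _; apply: eq_bigr => tau _; congr (_ * _).
rewrite [RHS](reindex_inj (@perm_inj _ g)) /=.
by apply: eq_bigr => z _; rewrite ffunE /hV Hg.
Qed.

Definition phi x y t : {ffun X -> 'I_k} :=
  [ffun z => if z \in V then tperm (t x) (t y) (t z) else if z == y then t x else t z].

Lemma P0_phi x y t : x \in V -> y \notin V -> P0 (phi x y t) = P0 t.
Proof.
move=> xV yV; rewrite (P0_const x (phi x y t) xV) (P0_const x t xV).
have -> : [forall z in V, phi x y t z == phi x y t x] = [forall z in V, t z == t x].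
  by apply: eq_forallb_in => z zV; rewrite !ffunE zV xV (inj_eq perm_inj).
case: ifP => // _; apply: eq_bigr => sg _.
rewrite ffunE xV tpermL (bigD1 y) //= [in RHS](bigD1 y) //= ffunE (negbTE yV) eqxx.
rewrite mulrCA; congr (_ * (_ * _)).
by apply: eq_bigr => z /andP [/negbTE zV /negbTE zy]; rewrite ffunE zV zy.
Qed.

Lemma phiK x y : x \in V -> y \notin V -> involutive (phi x y).
Proof.
move=> xV yV t; apply/ffunP => z.
have Hx : phi x y t x = t y by rewrite ffunE xV tpermL.
have Hy : phi x y t y = t x by rewrite ffunE (negbTE yV) eqxx.
rewrite [in LHS]ffunE Hx Hy; case: ifP => zV.
  by rewrite ffunE zV tpermC tpermK.
by case: eqP => [->|zy] //; rewrite ffunE zV; move/eqP/negbTE: zy => ->.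
Qed.

Lemma marg_inv (P : tensor R X k) (Y : {set X}) (f : {ffun X -> 'I_k} -> {ffun X -> 'I_k}) s s' :
  involutive f -> (forall t, P (f t) = P t) ->
  (forall t, [forall y in Y, f t y == s' y] = [forall y in Y, t y == s y]) ->
  marg Y P s' = marg Y P s.
Proof.
move=> fK HP Hc; rewrite /marg (reindex_inj (inv_inj fK)) /=.
by apply: eq_big => t; [exact: Hc | move=> _; rewrite /Pw HP].
Qed.

Lemma marg_swap_same (Y : {set X}) s x y : x \in Y -> y \in Y -> (x \in V) = (y \in V) ->
  marg Y Pw (swap_idx s x y) = marg Y Pw s.
Proof.
move=> xY yY Exy.
have gY z : z \in Y -> tperm x y z \in Y by case: tpermP => [->|->|].
apply: (@marg_inv Pw Y (fun t => swap_idx t x y)).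
- by move=> t; apply/ffunP => z; rewrite !swap_tperm !ffunE tpermK.
- move=> t; rewrite /Pw swap_tperm P0_perm // => z.
  by case: tpermP => [->|->|] //.
- move=> t; rewrite !swap_tperm; apply/forall_inP/forall_inP => H z zY.
    by have := H _ (gY z zY); rewrite !ffunE tpermK.
  by rewrite !ffunE; apply: H; apply: gY.
Qed.

Lemma marg_swap_phi (Y : {set X}) s x y : x \in Y -> y \in Y -> x \in V -> y \notin V ->
  (forall z, z \in V -> z \in Y -> z = x) ->
  marg Y Pw (swap_idx s x y) = marg Y Pw s.
Proof.
move=> xY yY xV yV HVY.
have xy : x != y by apply: contraNneq yV => <-.
apply: (@marg_inv Pw Y (phi x y)); first exact: phiK.
  by move=> t; rewrite /Pw P0_phi.
move=> t; rewrite swap_tperm.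
have Hx : phi x y t x = t y by rewrite ffunE xV tpermL.
have Hy : phi x y t y = t x by rewrite ffunE (negbTE yV) eqxx.
have Hz z : z \in Y -> z != x -> z != y -> phi x y t z = t z /\ tperm x y z = z.
  move=> zY zx zy; have zV : z \notin V by apply: contra zx => zV; rewrite (HVY z zV zY).
  by rewrite ffunE (negbTE zV) (negbTE zy) tpermD // eq_sym.
apply/forall_inP/forall_inP => H z zY.
- case: (eqVneq z x) => [->|zx].
    by have := H y yY; rewrite ffunE tpermR Hy.
  case: (eqVneq z y) => [->|zy].
    by have := H x xY; rewrite ffunE tpermL Hx.
  by have := H z zY; rewrite ffunE; case: (Hz z zY zx zy) => -> ->.
- rewrite [X in _ == X]ffunE; case: (eqVneq z x) => [->|zx].
    by rewrite tpermL Hx; apply: H.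
  case: (eqVneq z y) => [->|zy].
    by rewrite tpermR Hy; apply: H.
  by case: (Hz z zY zx zy) => -> ->; apply: H.
Qed.


Lemma Pw_UE (psi v : rtree X) : (0 < k)%N -> uniq (leaves psi) -> is_subtree v psi ->
  (forall z, (z \in V) = (z \in leaves v)) -> UE k psi Pw.
Proof.
move=> k0 Hu Hv HV; have Zp := Z0_gt0 k0; split.
  split; first by move=> t; rewrite /Pw divr_ge0 ?P0_ge0 // ltW.
  by rewrite /Pw -mulr_suml -/Z0 mulfV // gt_eqF.
move=> Y x y /two_clade_cluster [w0 [Hw [xw [yw [xY [yY Hwy]]]]]] s.
symmetry.
case: (boolP (x \in V)) => xV; case: (boolP (y \in V)) => yV.
- by apply: marg_swap_same => //; rewrite xV yV.
- apply: marg_swap_phi => // z; rewrite HV => zv zY.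
  have xv : x \in leaves v by rewrite -HV.
  have yv : y \notin leaves v by rewrite -HV.
  exact: (@VY_single X psi v w0 Y x y Hu Hv Hw xv yv xw yw Hwy z zv zY).
- rewrite swap_idxC; apply: marg_swap_phi => // z; rewrite HV => zv zY.
  have yv : y \in leaves v by rewrite -HV.
  have xv : x \notin leaves v by rewrite -HV.
  apply: (@VY_single X psi v w0 Y y x Hu Hv Hw yv xv yw xw _ z zv zY).
  by move=> z' z'w z'Y; case: (Hwy z' z'w z'Y); [right|left].
- by apply: marg_swap_same => //; rewrite (negbTE xV) (negbTE yV).
Qed.

Definition S3 (e x y : 'I_k) : R := \sum_sg w sg e * w sg x * w sg y.
Definition Kc (a b c d : X) : R := \prod_(z | z \notin [:: a; b; c; d]) Hs z.

Lemma S3C e x y : S3 e x y = S3 e y x.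
Proof. by apply: eq_bigr => sg _; rewrite mulrAC. Qed.

Lemma sum_prod4 (h : X -> 'I_k -> R) a b c d i j l m : uniq [:: a;b;c;d] ->
  \sum_(t : {ffun X -> 'I_k} | [&& t a == i, t b == j, t c == l & t d == m])
      \prod_z h z (t z)
  = h a i * h b j * h c l * h d m * \prod_(z | z \notin [:: a;b;c;d]) \sum_y h z y.
Proof.
move=> Hu; move: (Hu).
rewrite /= !inE !negb_or => /andP [/and3P [ab ac ad]] /andP [/andP [bc bd]] /andP [cd _].
have E1 := negbTE ab; have E2 := negbTE ac; have E3 := negbTE ad.
have E4 := negbTE bc; have E5 := negbTE bd; have E6 := negbTE cd.
have F1 := E1; have F2 := E2; have F3 := E3; have F4 := E4; have F5 := E5; have F6 := E6.
rewrite eq_sym in F1; rewrite eq_sym in F2; rewrite eq_sym in F3.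
rewrite eq_sym in F4; rewrite eq_sym in F5; rewrite eq_sym in F6.
pose Q z : pred 'I_k := if z == a then pred1 i else if z == b then pred1 j
  else if z == c then pred1 l else if z == d then pred1 m else predT.
rewrite (eq_bigl (fun t => t \in family Q)); last first.
  move=> t; apply/and4P/familyP.
    case=> /eqP Ha /eqP Hb /eqP Hc /eqP Hd z; rewrite /Q.
    case: eqP => [->|_]; first by rewrite inE Ha.
    case: eqP => [->|_]; first by rewrite inE Hb.
    case: eqP => [->|_]; first by rewrite inE Hc.
    by case: eqP => [->|_]; first by rewrite inE Hd.
  move=> H; have := H a; have := H b; have := H c; have := H d.
  by rewrite /Q !eqxx ?E1 ?E2 ?E3 ?E4 ?E5 ?E6 ?F1 ?F2 ?F3 ?F4 ?F5 ?F6 !inE => -> -> -> ->.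
rewrite -bigA_distr_big_dep.
rewrite (bigD1 a) // (bigD1 b) /=; last by rewrite F1.
rewrite (bigD1 c) /=; last by rewrite F2 F4.
rewrite (bigD1 d) /=; last by rewrite F3 F5 F6.
have -> : \sum_(y | Q a y) h a y = h a i by apply: big_pred1 => y; rewrite /Q eqxx.
have -> : \sum_(y | Q b y) h b y = h b j by apply: big_pred1 => y; rewrite /Q F1 eqxx.
have -> : \sum_(y | Q c y) h c y = h c l by apply: big_pred1 => y; rewrite /Q F2 F4 eqxx.
have -> : \sum_(y | Q d y) h d y = h d m by apply: big_pred1 => y; rewrite /Q F3 F5 F6 eqxx.
rewrite !mulrA; congr (_ * _).
apply: eq_big => z; first by rewrite !inE !negb_or !andbA.
move=> /andP [/andP [/andP [za zb] zc] zd]; apply: eq_bigl => y.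
by rewrite /Q (negbTE za) (negbTE zb) (negbTE zc) (negbTE zd).
Qed.

Lemma marg4_Pw a b c d i j l m : uniq [:: a; b; c; d] ->
  a \in V -> b \in V -> c \notin V -> d \notin V ->
  marg4 Pw a b c d i j l m = Kc a b c d / Z0 * (i == j)%:R * S3 i l m.
Proof.
move=> Hu aV bV cV dV.
rewrite /marg4 /Pw -mulr_suml.
have -> : \sum_(s : {ffun X -> 'I_k} | [&& s a == i, s b == j, s c == l & s d == m]) P0 s =
    \sum_sg \sum_tau w sg tau * (hV sg tau a i * hV sg tau b j * hV sg tau c l *
                                 hV sg tau d m * Kc a b c d).
  rewrite /P0 exchange_big; apply: eq_bigr => sg _; rewrite exchange_big.
  apply: eq_bigr => tau _.
  rewrite -mulr_sumr sum_prod4 //; congr (_ * (_ * _)).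
  by apply: eq_bigr => z _; rewrite sum_hV.
rewrite /hV aV bV (negbTE cV) (negbTE dV).
rewrite (eq_bigr (fun sg => (i == j)%:R * (Kc a b c d * (w sg i * w sg l * w sg m)))); last first.
  move=> sg _; rewrite (eq_bigr (fun tau => (tau == i)%:R *
       (w sg tau * ((j == tau)%:R * w sg l * w sg m * Kc a b c d)))).
    by rewrite sum_delta (eq_sym j i); ring.
  by move=> tau _; rewrite (eq_sym i tau); ring.
rewrite -mulr_sumr -mulr_sumr /S3; ring.
Qed.

Lemma Kc_gt0 a b c d : 0 < Kc a b c d.
Proof. by apply: prodr_gt0 => z _; apply: Hs_gt0. Qed.

End Witness.

Section Rank.
Variables (R : realType) (k : nat).
Local Notation S3 := (@S3 R k).
Local Notation w := (@w R k).

Lemma core (u : 'I_k -> R) e :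
  (forall y, \sum_x u x * S3 e x y = 0) -> forall x, u x = 0.
Proof.
move=> H.
have H1 : \sum_sg w sg e * (\sum_x u x * w sg x) ^+ 2 = 0.
  transitivity (\sum_y u y * (\sum_x u x * S3 e x y)); last first.
    by apply: big1 => y _; rewrite H mulr0.
  have R1 : \sum_y u y * (\sum_x u x * S3 e x y) =
      \sum_y \sum_x \sum_sg u y * (u x * (w sg e * w sg x * w sg y)).
    by apply: eq_bigr => y _; rewrite mulr_sumr; apply: eq_bigr => x _; rewrite /S3 !mulr_sumr.
  rewrite R1 [RHS]exchange_big /=.
  under [RHS]eq_bigr do rewrite exchange_big /=.
  rewrite [RHS]exchange_big /=; apply: eq_bigr => sg _.
  rewrite expr2 mulr_suml mulr_sumr; apply: eq_bigr => x _.
  rewrite !mulr_sumr; apply: eq_bigr => y _; ring.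
have H2 sg : \sum_x u x * w sg x = 0.
  have Hge : forall i : 'I_k, true -> 0 <= w i e * (\sum_x u x * w i x) ^+ 2.
    by move=> i _; rewrite mulr_ge0 ?sqr_ge0 // ltW ?w_gt0.
  have := @psumr_eq0P _ _ _ _ Hge H1 sg isT.
  by move/eqP; rewrite mulf_eq0 sqrf_eq0 gt_eqF ?w_gt0 //= => /eqP.
have H3 sg : \sum_x u x + u sg = 0.
  rewrite -[RHS](H2 sg) /w (eq_bigr (fun x => u x + (x == sg)%:R * u x) (P := xpredT) (r := index_enum 'I_k) (F1 := fun x => u x * (1 + (x == sg)%:R))); last first.
    by move=> x _; rewrite mulrDr mulr1 mulrC.
  by rewrite big_split /= sum_delta.
have Hs : \sum_x u x = 0.
  have : \sum_(sg : 'I_k) (\sum_x u x + u sg) = 0 by apply: big1 => sg _; apply: H3.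
  rewrite big_split /= sumr_const card_ord -mulr_natl.
  have -> : k%:R * \sum_x u x + \sum_x u x = (k%:R + 1) * \sum_x u x by ring.
  move/eqP; rewrite mulf_eq0 gt_eqF ?ltr_wpDl ?ler0n ?ltr01 //= => /eqP //.
by move=> x; have := H3 x; rewrite Hs add0r.
Qed.

Lemma det_flat_neq0 (M : 'M[R]_(#|{: pairs k}|)) (mk : 'I_k -> 'I_k -> pairs k)
    (o nn : pairs k -> 'I_k) (cst : R) :
  cst != 0 -> (forall e q, o (mk e q) = e) -> (forall e q, nn (mk e q) = q) ->
  (forall p, mk (o p) (nn p) = p) ->
  (forall p p', M (enum_rank p) (enum_rank p') = cst * (o p == o p')%:R * S3 (o p) (nn p) (nn p')) ->
  \det M != 0.
Proof.
move=> c0 Ho Hn Hmk HM; apply/det0P => -[v vn0 vM]; move/negP: vn0; apply.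
pose u p := v 0 (enum_rank p).
suff Hu : forall p, u p = 0.
  by apply/eqP/rowP => r; rewrite mxE -(enum_valK r); exact: Hu.
have Hcol p' : \sum_p u p * M (enum_rank p) (enum_rank p') = 0.
  transitivity ((v *m M) 0 (enum_rank p')); last by rewrite vM mxE.
  rewrite mxE [RHS](reindex enum_rank) //=; exact: onW_bij (@enum_rank_bij _).
move=> p; rewrite -(Hmk p).
move: (o p) (nn p) => e q.
have Hue : forall y, \sum_x u (mk e x) * S3 e x y = 0.
  move=> y; have := Hcol (mk e y).
  rewrite (reindex (fun pq : 'I_k * 'I_k => mk pq.1 pq.2)) /=; last first.
    exists (fun p => (o p, nn p)) => [[e' q'] _|p' _] /=; by rewrite ?Ho ?Hn ?Hmk.
  rewrite -(pair_bigA _ (fun e' q' => u (mk e' q') * M (enum_rank (mk e' q')) (enum_rank (mk e y)))) /=.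
  rewrite (bigD1 e) //= [X in _ + X]big1 ?addr0; last first.
    move=> e' /negbTE ne; apply: big1 => q' _; by rewrite HM !Ho ne /= !(mulr0, mul0r).
  move=> H.
  have : cst * (\sum_x u (mk e x) * S3 e x y) = 0.
    rewrite -[RHS]H mulr_sumr; apply: eq_bigr => x _; rewrite HM !Ho !Hn eqxx /= mulr1; ring.
  by move/eqP; rewrite mulf_eq0 (negbTE c0) /= => /eqP.
exact: core Hue q.
Qed.

End Rank.

Section RankBound.
Variables (R : realType) (k : nat).

Lemma sum_le_count n (i : nat) : (\sum_(j < n) (j <= i) = minn n i.+1)%N.
Proof.
elim: n => [|n IH]; first by rewrite big_ord0 min0n.
rewrite big_ord_recr /= IH; case: leqP => H /=; lia.
Qed.

Definition Qs : {set pairs k} := [set p : pairs k | (p.2 <= p.1)%N].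

Lemma card_Qs : #|Qs| = 'C(k.+1, 2).
Proof.
rewrite -sum1_card (eq_bigl (fun p : pairs k => true && (p.2 <= p.1)%N)); last first.
  by move=> p; rewrite inE.
rewrite -(@pair_big_dep _ _ _ 'I_k 'I_k xpredT (fun i j : 'I_k => (j <= i)%N) (fun _ _ => 1%N)) /=.
rewrite -bin2_sum big_mkord big_ord_recl /= add0n.
apply: eq_bigr => i _.
rewrite big_mkcond /= (eq_bigr (fun j : 'I_k => nat_of_bool (j <= i)%N)); last first.
  by move=> j _; case: ifP.
by rewrite sum_le_count; apply/minn_idPr; rewrite ltn_ord.
Qed.

Lemma rank_sym_le (n : nat) (M : 'M[R]_(#|{: pairs k}|, n)) :
  (forall i j c, M (enum_rank (i, j)) c = M (enum_rank (j, i)) c) ->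
  (\rank M <= 'C(k.+1, 2))%N.
Proof.
move=> HM.
pose srt (p : pairs k) : pairs k := if (p.2 <= p.1)%N then p else (p.2, p.1).
have srtQ p : srt p \in Qs.
  rewrite inE /srt; case: ifP => //= /negbT; rewrite -ltnNge => /ltnW //.
have HMs p c : M (enum_rank (srt p)) c = M (enum_rank p) c.
  by rewrite /srt; case: ifP => //; case: p => i j /= _; rewrite HM.
pose N : 'M[R]_(#|Qs|, n) := \matrix_(r, c) M (enum_rank (enum_val r)) c.
pose Sel : 'M[R]_(#|{: pairs k}|, #|Qs|) :=
  \matrix_(r, s) (enum_val s == srt (enum_val r))%:R.
have -> : M = Sel *m N.
  apply/matrixP => r c; rewrite !mxE.
  rewrite (bigD1 (enum_rank_in (srtQ (enum_val r)) (srt (enum_val r)))) //=.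
  rewrite !mxE enum_rankK_in // eqxx mul1r HMs enum_valK big1 ?addr0 //.
  move=> s Hs; rewrite !mxE.
  case: eqP => [E|_]; last by rewrite mul0r.
  have E2 := enum_valK_in (srtQ (enum_val r)) s.
  by move: Hs; rewrite -{1}E2 E eqxx.
apply: leq_trans (mxrankM_maxl _ _) _.
by rewrite (leq_trans (rank_leq_col _)) // card_Qs.
Qed.

End RankBound.

Section Final.
Variables (R : realType) (X : finType) (k : nat).

Definition mkS (a b c : X) (i j l m : 'I_k) : {ffun X -> 'I_k} :=
  [ffun z => if z == a then i else if z == b then j else if z == c then l else m].

Lemma uniq4 (a b c d : X) : uniq [:: a; b; c; d] ->
  (a == b) = false /\ (a == c) = false /\ (a == d) = false /\ (b == c) = false /\
      (b == d) = false /\ (c == d) = false.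
Proof.
rewrite /= !inE !negb_or => /andP [/and3P [ab ac ad]] /andP [/andP [bc bd]] /andP [cd _].
by rewrite !(negbTE ab, negbTE ac, negbTE ad, negbTE bc, negbTE bd, negbTE cd).
Qed.

Lemma marg4_marg (P : tensor R X k) a b c d i j l m : uniq [:: a;b;c;d] ->
  marg4 P a b c d i j l m = marg [set a; b; c; d] P (mkS a b c i j l m).
Proof.
move=> /uniq4 [E1 [E2 [E3 [E4 [E5 E6]]]]].
have F1 := E1; have F2 := E2; have F3 := E3; have F4 := E4; have F5 := E5; have F6 := E6.
rewrite eq_sym in F1; rewrite eq_sym in F2; rewrite eq_sym in F3.
rewrite eq_sym in F4; rewrite eq_sym in F5; rewrite eq_sym in F6.
apply: eq_bigl => t; apply/and4P/forall_inP.
  case=> /eqP Ha /eqP Hb /eqP Hc /eqP Hd z; rewrite !inE ffunE.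
  by move=> /orP [/orP [/orP [/eqP->|/eqP->]|/eqP->]|/eqP->]; rewrite ?eqxx ?E1 ?E2 ?E3 ?E4 ?E5 ?E6 ?F1 ?F2 ?F3 ?F4 ?F5 ?F6 ?Ha ?Hb ?Hc ?Hd.
move=> H; have := H a; have := H b; have := H c; have := H d.
rewrite !inE !ffunE !eqxx ?orbT /= ?E1 ?E2 ?E3 ?E4 ?E5 ?E6 ?F1 ?F2 ?F3 ?F4 ?F5 ?F6.
by move=> Hd Hc Hb Ha; split; [apply: Ha|apply: Hb|apply: Hc|apply: Hd].
Qed.

Lemma mkS_swap_ab a b c d i j l m : uniq [:: a;b;c;d] ->
  swap_idx (mkS a b c i j l m) a b = mkS a b c j i l m.
Proof.
move=> /uniq4 [E1 _]; have F1 := E1; rewrite eq_sym in F1.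
apply/ffunP => z; rewrite !ffunE.
case: (z =P a) => [Ez|/eqP /negbTE za]; first by subst z; rewrite F1 eqxx.
case: (z =P b) => [Ez|/eqP /negbTE zb]; first by subst z; rewrite eqxx.
by rewrite ?za ?zb.
Qed.

Lemma mkS_swap_cd a b c d i j l m : uniq [:: a;b;c;d] ->
  forall z, z \in [set a; b; c; d] ->
  swap_idx (mkS a b c i j l m) c d z = mkS a b c i j m l z.
Proof.
move=> /uniq4 [E1 [E2 [E3 [E4 [E5 E6]]]]].
have F1 := E1; have F2 := E2; have F3 := E3; have F4 := E4; have F5 := E5; have F6 := E6.
rewrite eq_sym in F1; rewrite eq_sym in F2; rewrite eq_sym in F3.
rewrite eq_sym in F4; rewrite eq_sym in F5; rewrite eq_sym in F6.
move=> z; rewrite !inE !ffunE => Hz.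
case: (z =P c) => [Ez|/eqP /negbTE zc]; first by subst z; rewrite ?F2 ?F4 ?F6 ?F3 ?F5 ?eqxx.
case: (z =P d) => [Ez|/eqP /negbTE zd]; first by subst z; rewrite ?F2 ?F4 ?F3 ?F5 ?F6 ?eqxx.
move: Hz; rewrite zc zd !orbF.
by case/orP => /eqP Ez; subst z; rewrite ?eqxx ?F1.
Qed.

Lemma marg_agree (P : tensor R X k) (Y : {set X}) (s s' : {ffun X -> 'I_k}) :
  (forall z, z \in Y -> s z = s' z) -> marg Y P s = marg Y P s'.
Proof.
move=> H; apply: eq_bigl => t; apply: eq_forallb_in => z zY; by rewrite H.
Qed.

Lemma marg4_swap (P : tensor R X k) a b c d i j l m :
  marg4 P a b c d i j l m = marg4 P c d a b l m i j.
Proof.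
apply: eq_bigl => t.
by apply/and4P/and4P => -[*]; split.
Qed.

Local Notation n0 := #|{: {ffun X -> 'I_k}}|.

Definition mmarg4 (a b c d : X) (i j l m : 'I_k) : {mpoly R[n0]} :=
  \sum_(s : {ffun X -> 'I_k} | [&& s a == i, s b == j, s c == l & s d == m])
     'X_(enum_rank s).

Definition mflat (Pt : 'I_k -> 'I_k -> 'I_k -> 'I_k -> {mpoly R[n0]})
  : 'M[{mpoly R[n0]}]_(#|{: pairs k}|) :=
  \matrix_(r, c) let: (i, j) := enum_val r in let: (l, m) := enum_val c in Pt i j l m.

Definition fpoly a b c d : {mpoly R[n0]} :=
  \det (mflat (fun i l j m => mmarg4 a b c d i j l m)) *
  \det (mflat (fun i m j l => mmarg4 a b c d i j l m)).

Lemma fpoly_eval (P : tensor R X k) a b c d :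
  (fpoly a b c d).@[coords P] =
  \det (Flat_ac_bd P a b c d) * \det (Flat_ad_bc P a b c d).
Proof.
rewrite /fpoly mevalM -!det_map_mx; congr (_ * _); apply: f_equal; apply/matrixP => r0 c0;
  rewrite !mxE; case: (enum_val r0) => i1 i2; case: (enum_val c0) => j1 j2 /=;
  rewrite rmorph_sum; apply: eq_bigr => s _;
  by rewrite -[LHS]/(_.@[coords P]) mevalXU /coords enum_rankK.
Qed.

End Final.

Theorem theorem3p3 (R : realType) (X : finType) (k : nat) (psi : rtree X)
  (a b c d : X) :
  (2 <= k)%N ->
  is_tree_on psi ->
  uniq [:: a; b; c; d] ->
  displays_quartet psi a b c d ->
  (forall P : tensor R X k, UE k psi P ->
     (\rank (Flat_ab_cd P a b c d) <= 'C(k.+1, 2))%N) /\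
  generic_UE k psi (fun P : tensor R X k =>
     \rank (Flat_ac_bd P a b c d) = (k ^ 2)%N /\
     \rank (Flat_ad_bc P a b c d) = (k ^ 2)%N).
Proof.
move=> hk Htree Hu Hq.
have k0 : (0 < k)%N by apply: leq_trans hk.
have Hu' : uniq [:: c; d; a; b] by rewrite (perm_uniq (permEl (perm_catC [:: c; d] [:: a; b]))).
split.
  move=> P [_ HUE].
  move: (Hq); rewrite /displays_quartet; case E: (restrict _ psi) => [u|] // [s [Hs Hp]].
  have Hsym x y : perm_eq (leaves s) [:: x; y] -> forall sv,
      marg [set a; b; c; d] P sv = marg [set a; b; c; d] P (swap_idx sv x y).
    by move=> Hxy; apply: HUE; rewrite /two_clade E; exists s.
  case: Hp => Hp; have {}Hsym := Hsym _ _ Hp.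
    apply: rank_sym_le => i j cc; rewrite /Flat_ab_cd /flat !mxE !enum_rankK /=.
    case: (enum_val cc) => l m.
    by rewrite !marg4_marg // Hsym (@mkS_swap_ab X k a b c d).
  rewrite -mxrank_tr; apply: rank_sym_le => l m r; rewrite /Flat_ab_cd /flat !mxE !enum_rankK /=.
  case: (enum_val r) => i j.
  rewrite !marg4_marg // Hsym; apply: marg_agree => z zY.
  by rewrite (@mkS_swap_cd X k a b c d).
exists (fpoly R X k a b c d); split; last first.
  move=> P _; rewrite fpoly_eval mulf_eq0 negb_or => /andP [h1 h2].
  have Hcard : #|{: pairs k}| = (k ^ 2)%N by rewrite card_prod card_ord mulnn.
  by split; rewrite mxrank_unit ?unitmxE ?unitfE.
have [v [Hv Hcase]] := @quartet_cluster X psi a b c d Hu Hq.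
pose V := [set z | z \in leaves v].
have HV z : (z \in V) = (z \in leaves v) by rewrite inE.
exists (Pw R X k V); split; first exact: Pw_UE k0 Htree.1 Hv HV.
have Zp := Z0_gt0 R X k V k0.
rewrite fpoly_eval; case: Hcase => [[av [bv [cv dv]]]|[cv [dv [av bv]]]];
  rewrite -!HV in av bv cv dv.
- have c0 : Kc R X k V a b c d / Z0 R X k V != 0.
    by rewrite mulf_neq0 ?invr_eq0 ?gt_eqF ?Kc_gt0.
  rewrite mulf_neq0 //.
    apply: (@det_flat_neq0 R k _ (fun e q => (e, q)) fst snd _ c0) => // [[]//|[i l] [j m]].
    by rewrite /Flat_ac_bd /flat mxE !enum_rankK /= marg4_Pw.
  apply: (@det_flat_neq0 R k _ (fun e q => (e, q)) fst snd _ c0) => // [[]//|[i m] [j l]].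
  by rewrite /Flat_ad_bc /flat mxE !enum_rankK /= marg4_Pw // S3C.
- have c0 : Kc R X k V c d a b / Z0 R X k V != 0.
    by rewrite mulf_neq0 ?invr_eq0 ?gt_eqF ?Kc_gt0.
  rewrite mulf_neq0 //.
    apply: (@det_flat_neq0 R k _ (fun e q => (q, e)) snd fst _ c0) => // [[]//|[i l] [j m]].
    by rewrite /Flat_ac_bd /flat mxE !enum_rankK /= marg4_swap marg4_Pw.
  apply: (@det_flat_neq0 R k _ (fun e q => (q, e)) snd fst _ c0) => // [[]//|[i m] [j l]].
  rewrite /Flat_ad_bc /flat mxE !enum_rankK /= marg4_swap marg4_Pw //=.
  by rewrite eq_sym; case: eqP => [->|_] //; rewrite !mulr0 !mul0r.
Qed.
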